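(* Let $\Pi$ be the topological prismatoid \#1039 of Criado and Santos: a polyhedral $4$-sphere on the $14$ vertices $0,1,2,3,4,5,6,a,b,c,d,e,f,g$ whose simplicial facets are exactly the following $4$-simplices (each string lists the five vertices of a facet): 0145f, 014ad, 014ae, 014bc, 014bf, 014cd, 04bcd, 05bde, 05cde, 0123d, 0126d, 0134e, 013ad, 013ae, 0156g, 015bf, 015bg, 016cd, 016cg, 01bcg, 0234e, 023cd, 023ce, 0245f, 024ae, 024af, 0256g, 025ae, 025af, 025be, 025bg, 026be, 026bg, 026cd, 026ce, 03acd, 03ace, 04abd, 04abf, 05abd, 05abf, 05acd, 05ace, 06bce, 06bcg, 0bcde, 1234e, 123ae, 123af, 123bf, 123bg, 123cd, 123cg, 1245f, 124ae, 124af, 1256g, 125bf, 125bg, 126cd, 126cg, 13abf, 13abg, 13acd, 13acg, 14abf, 14abg, 14acd, 14acg, 14bcg, 23ace, 23acf, 23bcf, 23bcg, 25abe, 25abf, 26abe, 26abf, 26ace, 26acf, 26bcf, 26bcg, 3abfg, 3acfg, 3bcfg, 4abcd, 4abcg, 5abde, 5acde, 6abef, 6acef, 6bcef, and which in addition has exactly two non-simplicial facets, its two bases, with vertex sets $\{0,1,\dots,6\}$ and $\{a,b,\dots,g\}$. Then $\Pi$ is not realizable: there is no convex $5$-polytope whose boundary complex is combinatorially isomorphic to $\Pi$.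
   Context: A topological prismatoid (Criado–Santos) is a combinatorial abstraction of a geometric prismatoid, i.e. of a polytope all of whose vertices lie in two parallel facets (the bases); all other facets are here simplices. *)

(* Defs.v *)
From mathcomp Require Import all_boot all_order all_algebra.
From mathcomp Require Import reals.
Set Implicit Arguments. Unset Strict Implicit. Unset Printing Implicit Defensive.
Import Order.TTheory GRing.Theory Num.Theory.
Local Open Scope ring_scope.

(* Vertex labels of the prismatoid: 'I_14, with
   0..6 |-> 0..6 and a,b,c,d,e,f,g |-> 7,8,9,10,11,12,13. *)
Definition label := 'I_14.

Definition simplicial_facets_nat : seq (seq nat) :=
  [:: [:: 0; 1; 4; 5; 12];
   [:: 0; 1; 4; 7; 10];
   [:: 0; 1; 4; 7; 11];
   [:: 0; 1; 4; 8; 9];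
   [:: 0; 1; 4; 8; 12];
   [:: 0; 1; 4; 9; 10];
   [:: 0; 4; 8; 9; 10];
   [:: 0; 5; 8; 10; 11];
   [:: 0; 5; 9; 10; 11];
   [:: 0; 1; 2; 3; 10];
   [:: 0; 1; 2; 6; 10];
   [:: 0; 1; 3; 4; 11];
   [:: 0; 1; 3; 7; 10];
   [:: 0; 1; 3; 7; 11];
   [:: 0; 1; 5; 6; 13];
   [:: 0; 1; 5; 8; 12];
   [:: 0; 1; 5; 8; 13];
   [:: 0; 1; 6; 9; 10];
   [:: 0; 1; 6; 9; 13];
   [:: 0; 1; 8; 9; 13];
   [:: 0; 2; 3; 4; 11];
   [:: 0; 2; 3; 9; 10];
   [:: 0; 2; 3; 9; 11];
   [:: 0; 2; 4; 5; 12];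
   [:: 0; 2; 4; 7; 11];
   [:: 0; 2; 4; 7; 12];
   [:: 0; 2; 5; 6; 13];
   [:: 0; 2; 5; 7; 11];
   [:: 0; 2; 5; 7; 12];
   [:: 0; 2; 5; 8; 11];
   [:: 0; 2; 5; 8; 13];
   [:: 0; 2; 6; 8; 11];
   [:: 0; 2; 6; 8; 13];
   [:: 0; 2; 6; 9; 10];
   [:: 0; 2; 6; 9; 11];
   [:: 0; 3; 7; 9; 10];
   [:: 0; 3; 7; 9; 11];
   [:: 0; 4; 7; 8; 10];
   [:: 0; 4; 7; 8; 12];
   [:: 0; 5; 7; 8; 10];
   [:: 0; 5; 7; 8; 12];
   [:: 0; 5; 7; 9; 10];
   [:: 0; 5; 7; 9; 11];
   [:: 0; 6; 8; 9; 11];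
   [:: 0; 6; 8; 9; 13];
   [:: 0; 8; 9; 10; 11];
   [:: 1; 2; 3; 4; 11];
   [:: 1; 2; 3; 7; 11];
   [:: 1; 2; 3; 7; 12];
   [:: 1; 2; 3; 8; 12];
   [:: 1; 2; 3; 8; 13];
   [:: 1; 2; 3; 9; 10];
   [:: 1; 2; 3; 9; 13];
   [:: 1; 2; 4; 5; 12];
   [:: 1; 2; 4; 7; 11];
   [:: 1; 2; 4; 7; 12];
   [:: 1; 2; 5; 6; 13];
   [:: 1; 2; 5; 8; 12];
   [:: 1; 2; 5; 8; 13];
   [:: 1; 2; 6; 9; 10];
   [:: 1; 2; 6; 9; 13];
   [:: 1; 3; 7; 8; 12];
   [:: 1; 3; 7; 8; 13];
   [:: 1; 3; 7; 9; 10];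
   [:: 1; 3; 7; 9; 13];
   [:: 1; 4; 7; 8; 12];
   [:: 1; 4; 7; 8; 13];
   [:: 1; 4; 7; 9; 10];
   [:: 1; 4; 7; 9; 13];
   [:: 1; 4; 8; 9; 13];
   [:: 2; 3; 7; 9; 11];
   [:: 2; 3; 7; 9; 12];
   [:: 2; 3; 8; 9; 12];
   [:: 2; 3; 8; 9; 13];
   [:: 2; 5; 7; 8; 11];
   [:: 2; 5; 7; 8; 12];
   [:: 2; 6; 7; 8; 11];
   [:: 2; 6; 7; 8; 12];
   [:: 2; 6; 7; 9; 11];
   [:: 2; 6; 7; 9; 12];
   [:: 2; 6; 8; 9; 12];
   [:: 2; 6; 8; 9; 13];
   [:: 3; 7; 8; 12; 13];
   [:: 3; 7; 9; 12; 13];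
   [:: 3; 8; 9; 12; 13];
   [:: 4; 7; 8; 9; 10];
   [:: 4; 7; 8; 9; 13];
   [:: 5; 7; 8; 10; 11];
   [:: 5; 7; 9; 10; 11];
   [:: 6; 7; 8; 11; 12];
   [:: 6; 7; 9; 11; 12];
   [:: 6; 8; 9; 11; 12]].

Definition set_of_nats (s : seq nat) : {set label} :=
  [set i : label | nat_of_ord i \in s].

Definition base0 : {set label} := [set i : label | (i < 7)%N].
Definition base1 : {set label} := [set i : label | (7 <= i)%N].

Definition Pi_facets : seq {set label} :=
  base0 :: base1 :: map set_of_nats simplicial_facets_nat.

Definition dot (R : realType) (u v : 'rV[R]_5) : R := \sum_(k < 5) u 0 k * v 0 k.

(* Homogenized coordinates [p i, 1] of the points with labels in F (other rows 0);
   its rank is (affine dimension of {p i | i in F}) + 1. *)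
Definition hmx (R : realType) (p : label -> 'rV[R]_5) (F : {set label}) : 'M[R]_(14, 6) :=
  \matrix_(i < 14, j < 6)
    (if i \in F then (if (j < 5)%N then p i 0 (inord j) else 1) else 0).

(* F is the set of points of {p i} lying on some supporting hyperplane
   {x | dot c x = b} of conv{p i}, c <> 0 (an exposed face, labelled by its points). *)
Definition is_face_set (R : realType) (p : label -> 'rV[R]_5) (F : {set label}) : Prop :=
  exists (c : 'rV[R]_5) (b : R), c != 0 /\
    forall i : label, (i \in F -> dot c (p i) = b) /\ (i \notin F -> dot c (p i) < b).

Definition is_vertex (R : realType) (p : label -> 'rV[R]_5) (i : label) : Prop :=
  is_face_set p [set i].

Definition is_facet_set (R : realType) (p : label -> 'rV[R]_5) (F : {set label}) : Prop :=
  is_face_set p F /\ \rank (hmx p F) = 5%N.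

(* Since the face lattice of a polytope is determined by
   its vertex-facet incidences, this is combinatorial isomorphism of boundary complexes. *)
Definition realizes (R : realType) (p : label -> 'rV[R]_5) : Prop :=
  injective p /\
  (forall i, is_vertex p i) /\
  \rank (hmx p setT) = 6%N /\
  (forall F : {set label}, is_facet_set p F <-> F \in Pi_facets).

(* Main.v *)
Require Import Defs.
From mathcomp Require Import all_boot all_order all_algebra.
From mathcomp Require Import reals.
From mathcomp Require Import fingroup perm.
From mathcomp Require Import ring lra.
Set Implicit Arguments. Unset Strict Implicit. Unset Printing Implicit Defensive.
Import Order.TTheory GRing.Theory Num.Theory.
Local Open Scope ring_scope.

Section Infra.
Variable R : realType.

Definition r6 (x0 x1 x2 x3 x4 x5 : 'rV[R]_6) (i : 'I_6) : 'rV[R]_6 :=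
  nth 0 [:: x0; x1; x2; x3; x4; x5] i.
Definition matr (r : 'I_6 -> 'rV[R]_6) : 'M[R]_6 := \matrix_(i, j) r i 0 j.
Definition Dr x0 x1 x2 x3 x4 x5 := \det (matr (r6 x0 x1 x2 x3 x4 x5)).
Definition fv (v : 'rV[R]_6) (phi : 'cV[R]_6) : R := (v *m phi) 0 0.

Lemma row_matr r i : row i (matr r) = r i.
Proof. by apply/rowP => j; rewrite !mxE. Qed.

Lemma det_swap (r r' : 'I_6 -> 'rV[R]_6) (i1 i2 : 'I_6) :
  i1 != i2 -> (forall i, r' i = r (tperm i1 i2 i)) ->
  \det (matr r') = - \det (matr r).
Proof.
move=> ne H.
have -> : matr r' = row_perm (tperm i1 i2) (matr r).
  by apply/matrixP => i j; rewrite !mxE H.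
by rewrite row_permE det_mulmx det_perm odd_tperm ne expr1 mulN1r.
Qed.

Lemma sw0 x0 x1 x2 x3 x4 x5 : Dr x0 x1 x2 x3 x4 x5 = - Dr x1 x0 x2 x3 x4 x5.
Proof.
apply: (@det_swap _ _ (@Ordinal 6 0 isT) (@Ordinal 6 1 isT)); first by [].
by move=> i; rewrite permE /=; case: i => [[|[|[|[|[|[|]]]]]] Hi].
Qed.

Lemma sw1 x0 x1 x2 x3 x4 x5 : Dr x0 x1 x2 x3 x4 x5 = - Dr x0 x2 x1 x3 x4 x5.
Proof.
apply: (@det_swap _ _ (@Ordinal 6 1 isT) (@Ordinal 6 2 isT)); first by [].
by move=> i; rewrite permE /=; case: i => [[|[|[|[|[|[|]]]]]] Hi].
Qed.

Lemma sw2 x0 x1 x2 x3 x4 x5 : Dr x0 x1 x2 x3 x4 x5 = - Dr x0 x1 x3 x2 x4 x5.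
Proof.
apply: (@det_swap _ _ (@Ordinal 6 2 isT) (@Ordinal 6 3 isT)); first by [].
by move=> i; rewrite permE /=; case: i => [[|[|[|[|[|[|]]]]]] Hi].
Qed.

Lemma sw3 x0 x1 x2 x3 x4 x5 : Dr x0 x1 x2 x3 x4 x5 = - Dr x0 x1 x2 x4 x3 x5.
Proof.
apply: (@det_swap _ _ (@Ordinal 6 3 isT) (@Ordinal 6 4 isT)); first by [].
by move=> i; rewrite permE /=; case: i => [[|[|[|[|[|[|]]]]]] Hi].
Qed.

Lemma sw4 x0 x1 x2 x3 x4 x5 : Dr x0 x1 x2 x3 x4 x5 = - Dr x0 x1 x2 x3 x5 x4.
Proof.
apply: (@det_swap _ _ (@Ordinal 6 4 isT) (@Ordinal 6 5 isT)); first by [].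
by move=> i; rewrite permE /=; case: i => [[|[|[|[|[|[|]]]]]] Hi].
Qed.


Definition kcol x0 x1 x2 x3 x4 : 'cV[R]_6 :=
  \col_j cofactor (matr (r6 x0 x1 x2 x3 x4 0)) ord_max j.

Lemma lin_last x0 x1 x2 x3 x4 v : Dr x0 x1 x2 x3 x4 v = fv v (kcol x0 x1 x2 x3 x4).
Proof.
rewrite /Dr (expand_det_row _ ord_max) /fv !mxE; apply: eq_bigr => j _.
rewrite !mxE; congr (_ * _).
rewrite /cofactor; congr (_ * \det _); apply/matrixP => i k; rewrite !mxE.
by case: i => [[|[|[|[|[|]]]]] Hi].
Qed.

Lemma fvD a b (v w : 'rV[R]_6) k : fv (a *: v + b *: w) k = a * fv v k + b * fv w k.
Proof. by rewrite /fv mulmxDl -!scalemxAl !mxE. Qed.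

Lemma fvB a b (v w : 'rV[R]_6) k : fv (a *: v - b *: w) k = a * fv v k - b * fv w k.
Proof. by rewrite /fv mulmxDl mulNmx -!scalemxAl !mxE. Qed.

Lemma fv3 a b c (u v w : 'rV[R]_6) k :
  fv (a *: u - b *: v + c *: w) k = a * fv u k - b * fv v k + c * fv w k.
Proof. by rewrite /fv !mulmxDl mulNmx -!scalemxAl !mxE. Qed.

Lemma fv0 v : fv v 0 = 0.
Proof. by rewrite /fv mulmx0 mxE. Qed.

Lemma det0_ker (M : 'M[R]_6) (phi : 'cV[R]_6) : phi != 0 -> M *m phi = 0 -> \det M = 0.
Proof.
move=> nz H; apply/eqP; apply: contraNT nz => dn.
have uM : M \in unitmx by rewrite unitmxE unitfE.
by rewrite -(mulKmx uM phi) H mulmx0.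
Qed.

Lemma matr_ker r phi : (forall i, fv (r i) phi = 0) -> matr r *m phi = 0.
Proof.
move=> H; apply/matrixP => i j; rewrite ord1 [RHS]mxE -(H i) /fv !mxE.
by apply: eq_bigr => k _; rewrite !mxE.
Qed.

Lemma KEY (phi : 'cV[R]_6) x0 x1 x2 x3 x4 v w :
  fv x0 phi = 0 -> fv x1 phi = 0 -> fv x2 phi = 0 -> fv x3 phi = 0 -> fv x4 phi = 0 ->
  Dr x0 x1 x2 x3 x4 v * fv w phi = Dr x0 x1 x2 x3 x4 w * fv v phi.
Proof.
move=> h0 h1 h2 h3 h4.
have [->|nz] := eqVneq phi 0; first by rewrite !fv0 !mulr0.
set u := fv w phi *: v - fv v phi *: w.
have hu : fv u phi = 0 by rewrite /u fvB; ring.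
have : Dr x0 x1 x2 x3 x4 u = 0.
  apply: (det0_ker nz); apply: matr_ker => i.
  by case: i => [[|[|[|[|[|[|]]]]]] Hi].
rewrite lin_last /u fvB -!lin_last => /eqP; rewrite subr_eq0 => /eqP.
by rewrite mulrC => ->; rewrite mulrC.
Qed.

Section GP.
Variables x0 x1 x2 x3 : 'rV[R]_6.
Let om u v := Dr x0 x1 x2 x3 u v.

Lemma om_anti u v : om u v = - om v u.
Proof. exact: sw4. Qed.

Lemma om_lin1 u v : om u v = - fv u (kcol x0 x1 x2 x3 v).
Proof. by rewrite om_anti /om lin_last. Qed.

Lemma om_dup0 u : om u x0 = 0.
Proof. by apply: (@determinant_alternate _ _ _ (@Ordinal 6 0 isT) (@Ordinal 6 5 isT)) => // j; rewrite !mxE. Qed.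
Lemma om_dup1 u : om u x1 = 0.
Proof. by apply: (@determinant_alternate _ _ _ (@Ordinal 6 1 isT) (@Ordinal 6 5 isT)) => // j; rewrite !mxE. Qed.
Lemma om_dup2 u : om u x2 = 0.
Proof. by apply: (@determinant_alternate _ _ _ (@Ordinal 6 2 isT) (@Ordinal 6 5 isT)) => // j; rewrite !mxE. Qed.
Lemma om_dup3 u : om u x3 = 0.
Proof. by apply: (@determinant_alternate _ _ _ (@Ordinal 6 3 isT) (@Ordinal 6 5 isT)) => // j; rewrite !mxE. Qed.
Lemma om_dup u : om u u = 0.
Proof. by apply: (@determinant_alternate _ _ _ (@Ordinal 6 4 isT) (@Ordinal 6 5 isT)) => // j; rewrite !mxE. Qed.

Lemma om_kill u y z d : om y z != 0 -> om u y = 0 -> om u z = 0 -> om u d = 0.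
Proof.
move=> nz hy hz.
set k := kcol x0 x1 x2 x3 u.
have E v : om u v = fv v k by rewrite /om lin_last.
have uM : matr (r6 x0 x1 x2 x3 y z) \in unitmx by rewrite unitmxE unitfE.
have Mk : matr (r6 x0 x1 x2 x3 y z) *m k = 0.
  apply: matr_ker => i; rewrite -E.
  case: i => [[|[|[|[|[|[|]]]]]] Hi] //=.
  - exact: om_dup0.
  - exact: om_dup1.
  - exact: om_dup2.
  - exact: om_dup3.
have k0 : k = 0 by rewrite -(mulKmx uM k) Mk mulmx0.
by rewrite E k0 fv0.
Qed.

Lemma GP a b c d :
  om a b * om c d - om a c * om b d + om a d * om b c = 0.
Proof.
set u := om b c *: a - om a c *: b + om a b *: c.
have Eu v : om u v = om b c * om a v - om a c * om b v + om a b * om c v.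
  have F w v' : fv w (kcol x0 x1 x2 x3 v') = - om w v' by rewrite om_lin1 opprK.
  by rewrite om_lin1 fv3 !F; ring.
have ha : om u a = 0 by rewrite Eu om_dup (om_anti b a) (om_anti c a); ring.
have hb : om u b = 0 by rewrite Eu om_dup (om_anti c b); ring.
have hc : om u c = 0 by rewrite Eu om_dup; ring.
have key : om u d = om a b * om c d - om a c * om b d + om a d * om b c.
  by rewrite Eu (om_anti b d) (om_anti c d); ring.
have [ab|ab] := eqVneq (om a b) 0; last by rewrite -key (om_kill d ab ha hb).
have [ac|ac] := eqVneq (om a c) 0; last by rewrite -key (om_kill d ac ha hc).
have [bc|bc] := eqVneq (om b c) 0; last by rewrite -key (om_kill d bc hb hc).
by rewrite ab ac bc; ring.
Qed.
End GP.

Definition Qm (x0 x1 x2 x3 x4 : 'rV[R]_6) : 'M[R]_(5,6) :=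
  \matrix_(i < 5, j < 6) nth 0 [:: x0; x1; x2; x3; x4] i 0 j.

Lemma nz_root x0 x1 x2 x3 x4 v phi :
  (5 <= \rank (Qm x0 x1 x2 x3 x4))%N ->
  fv x0 phi = 0 -> fv x1 phi = 0 -> fv x2 phi = 0 -> fv x3 phi = 0 -> fv x4 phi = 0 ->
  fv v phi != 0 -> Dr x0 x1 x2 x3 x4 v != 0.
Proof.
move=> rk h0 h1 h2 h3 h4 hv; apply/negP => /eqP d0.
set M := matr (r6 x0 x1 x2 x3 x4 v).
set Q := Qm x0 x1 x2 x3 x4.
have sQM : (Q <= M)%MS.
  apply/row_subP => i; rewrite (_ : row i Q = row (lift ord_max i) M); first exact: row_sub.
  by apply/rowP => j; rewrite !mxE; case: i => [[|[|[|[|[|]]]]] Hi].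
have rM : (\rank M <= 5)%N.
  have : ~~ (M \in unitmx) by rewrite unitmxE unitfE negbK; apply/eqP; exact: d0.
  rewrite -row_free_unit /row_free => ne.
  by have := rank_leq_row M; rewrite leq_eqVlt (negPf ne).
have eqr : \rank Q = \rank M.
  apply/eqP; rewrite eqn_leq mxrankS //=; exact: leq_trans rM rk.
have sMQ : (M <= Q)%MS by rewrite -(mxrank_leqif_sup sQM) eqr.
have : (row ord_max M <= Q)%MS by apply: submx_trans sMQ; exact: row_sub.
rewrite row_matr => /submxP [y Hy].
have Qphi : Q *m phi = 0.
  apply/matrixP => i j; rewrite ord1 [RHS]mxE.
  have -> : 0 = fv (nth 0 [:: x0; x1; x2; x3; x4] i) phi.
    by case: i => [[|[|[|[|[|]]]]] Hi] //=; rewrite ?h0 ?h1 ?h2 ?h3 ?h4 /fv mul0mx mxE.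
  rewrite /fv !mxE; apply: eq_bigr => k _; by rewrite !mxE.
rewrite /r6 /= in Hy.
move: hv; rewrite /fv Hy -mulmxA Qphi mulmx0 mxE eqxx.
done.
Qed.


Definition hv (p : label -> 'rV[R]_5) (i : label) : 'rV[R]_6 :=
  \row_(j < 6) (if (j < 5)%N then p i 0 (inord j) else 1).
Definition phic (c : 'rV[R]_5) (b : R) : 'cV[R]_6 :=
  \col_(j < 6) (if (j < 5)%N then c 0 (inord j) else - b).

Lemma hv_phi p c b i : fv (hv p i) (phic c b) = dot c (p i) - b.
Proof.
rewrite /fv /dot mxE big_ord_recr; congr (_ + _).
- apply: eq_bigr => j _; rewrite !mxE.
  have -> : (widen_ord (leqnSn 5) j < 5)%N = true := ltn_ord j.
  have -> : inord (widen_ord (leqnSn 5) j) = j :> 'I_5 by apply/val_inj; rewrite /= inordK.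
  by rewrite mulrC.
- rewrite !mxE.
  have -> : ((ord_max : 'I_6) < 5)%N = false by [].
  by rewrite mul1r.
Qed.
Lemma row_hmx p (F : {set label}) (i : label) : row i (hmx p F) = if i \in F then hv p i else 0.
Proof. by apply/rowP => j; rewrite !mxE; case: (i \in F) => //; rewrite mxE. Qed.

Lemma hmx_sub p (F : {set label}) (a0 a1 a2 a3 a4 : label) :
  (forall i, i \in F -> i \in [:: a0; a1; a2; a3; a4]) ->
  (hmx p F <= Qm (hv p a0) (hv p a1) (hv p a2) (hv p a3) (hv p a4))%MS.
Proof.
move=> H; apply/row_subP => i; rewrite row_hmx.
case: ifP => [/H|_]; last exact: sub0mx.
rewrite !inE => /orP [/eqP->|/orP [/eqP->|/orP [/eqP->|/orP [/eqP->|/eqP->]]]].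
- by apply/(eq_row_sub (@Ordinal 5 0 isT))/rowP => j; rewrite !mxE.
- by apply/(eq_row_sub (@Ordinal 5 1 isT))/rowP => j; rewrite !mxE.
- by apply/(eq_row_sub (@Ordinal 5 2 isT))/rowP => j; rewrite !mxE.
- by apply/(eq_row_sub (@Ordinal 5 3 isT))/rowP => j; rewrite !mxE.
- by apply/(eq_row_sub (@Ordinal 5 4 isT))/rowP => j; rewrite !mxE.
Qed.

Lemma facet_data p (F : {set label}) : realizes p -> F \in Pi_facets ->
  exists c b, (forall i, i \in F -> fv (hv p i) (phic c b) = 0) /\
              (forall i, i \notin F -> fv (hv p i) (phic c b) < 0) /\
              \rank (hmx p F) = 5%N.
Proof.
move=> [_ [_ [_ H]]] /H [[c [b [_ Hf]]] rk]; exists c, b; split; [|split] => // i.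
- by move=> /(proj1 (Hf i)) e; rewrite hv_phi e subrr.
- by move=> /(proj2 (Hf i)) e; rewrite hv_phi subr_lt0.
Qed.

Lemma mem_simp l : l \in simplicial_facets_nat -> set_of_nats l \in Pi_facets.
Proof. by move=> h; do 2 apply: mem_behead; exact: map_f. Qed.

Lemma mem_b0 : base0 \in Pi_facets.
Proof. by rewrite /Pi_facets in_cons eqxx. Qed.
Lemma mem_b1 : base1 \in Pi_facets.
Proof. by apply: mem_behead; rewrite /= in_cons eqxx. Qed.

Lemma step (X Y f1 f2 z : R) : X * f2 = Y * f1 -> f1 < 0 -> f2 < 0 -> 0 < X * z -> 0 < Y * z.
Proof.
move=> E h1 h2 h3.
have e : (X * z) * f2 = (Y * z) * f1 by rewrite mulrAC E mulrAC.
have : (X * z) * f2 < 0 by rewrite pmulr_rlt0.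
by rewrite e nmulr_llt0.
Qed.

Lemma prodpos (x y z : R) : 0 < x * z -> 0 < y * z -> 0 < x * y.
Proof.
move=> h1 h2.
have zz : 0 < z * z.
  case: (ltrgtP z 0) => [hz|hz|hz]; [by rewrite nmulr_rgt0 | by rewrite mulr_gt0 |].
  by move: h1; rewrite hz mulr0 ltxx.
have : 0 < (x * z) * (y * z) by apply: mulr_gt0.
by rewrite mulrACA pmulr_lgt0.
Qed.

Lemma sq_pos (z : R) : z != 0 -> 0 < z * z.
Proof.
move=> nz; case: (ltrgtP z 0) => [hz|hz|hz]; [by rewrite nmulr_rgt0 | by rewrite mulr_gt0 |].
by move: nz; rewrite hz eqxx.
Qed.

End Infra.

Local Notation L n := (@Ordinal 14 n isT).

Theorem mainTheorem3 (R : realType) :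
  ~ (exists p : label -> 'rV[R]_5, realizes p).
Proof.
move=> [p Hr].
  have [cF0 [bF0 [EF0 [NF0 rkF0]]]] := facet_data Hr (mem_simp (l:=[:: 1; 2; 3; 4; 11]) ltac:(by rewrite inE)).
  have Znz : (Dr (hv p (L 1)) (hv p (L 2)) (hv p (L 3)) (hv p (L 4)) (hv p (L 11)) (hv p (L 0))) != 0.
    apply: (nz_root (phi := phic cF0 bF0)) => //.
    - have sub : (hmx p (set_of_nats [:: 1; 2; 3; 4; 11]) <= Qm (hv p (L 1)) (hv p (L 2)) (hv p (L 3)) (hv p (L 4)) (hv p (L 11)))%MS.
        by apply: hmx_sub => i; rewrite !inE.
      exact: leq_trans (eq_leq (esym rkF0)) (mxrankS sub).
    - exact: (EF0 (L 1) ltac:(by rewrite inE)).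
    - exact: (EF0 (L 2) ltac:(by rewrite inE)).
    - exact: (EF0 (L 3) ltac:(by rewrite inE)).
    - exact: (EF0 (L 4) ltac:(by rewrite inE)).
    - exact: (EF0 (L 11) ltac:(by rewrite inE)).
    - by rewrite lt_eqF // (NF0 (L 0) ltac:(by rewrite inE)).
  have P0 : 0 < (Dr (hv p (L 1)) (hv p (L 2)) (hv p (L 3)) (hv p (L 4)) (hv p (L 11)) (hv p (L 0))) * (Dr (hv p (L 1)) (hv p (L 2)) (hv p (L 3)) (hv p (L 4)) (hv p (L 11)) (hv p (L 0))) by apply: sq_pos.
  have [cF1 [bF1 [EF1 [NF1 rkF1]]]] := facet_data Hr (mem_simp (l:=[:: 0; 1; 3; 4; 11]) ltac:(by rewrite inE)).
  have : (Dr (hv p (L 1)) (hv p (L 2)) (hv p (L 3)) (hv p (L 4)) (hv p (L 11)) (hv p (L 0))) = (Dr (hv p (L 0)) (hv p (L 1)) (hv p (L 3)) (hv p (L 4)) (hv p (L 11)) (hv p (L 2))).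
    rewrite [in X in X = _](sw4).
    rewrite [in X in X = _](sw3).
    rewrite [in X in X = _](sw2).
    rewrite [in X in X = _](sw1).
    rewrite [in X in X = _](sw0).
    rewrite [in X in X = _](sw2).
    rewrite [in X in X = _](sw3).
    rewrite [in X in X = _](sw4).
    by rewrite ?opprK.
  move=> Eq1.
  have P1 : 0 < (Dr (hv p (L 0)) (hv p (L 1)) (hv p (L 3)) (hv p (L 4)) (hv p (L 11)) (hv p (L 7))) * (Dr (hv p (L 1)) (hv p (L 2)) (hv p (L 3)) (hv p (L 4)) (hv p (L 11)) (hv p (L 0))).
    apply: (step (X:=(Dr (hv p (L 0)) (hv p (L 1)) (hv p (L 3)) (hv p (L 4)) (hv p (L 11)) (hv p (L 2)))) (f1:=fv (hv p (L 2)) (phic cF1 bF1)) (f2:=fv (hv p (L 7)) (phic cF1 bF1))).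
    - exact: (@KEY _ (phic cF1 bF1) (hv p (L 0)) (hv p (L 1)) (hv p (L 3)) (hv p (L 4)) (hv p (L 11)) (hv p (L 2)) (hv p (L 7)) (EF1 (L 0) ltac:(by rewrite inE)) (EF1 (L 1) ltac:(by rewrite inE)) (EF1 (L 3) ltac:(by rewrite inE)) (EF1 (L 4) ltac:(by rewrite inE)) (EF1 (L 11) ltac:(by rewrite inE))).
    - exact: (NF1 (L 2) ltac:(by rewrite inE)).
    - exact: (NF1 (L 7) ltac:(by rewrite inE)).
    - by rewrite -Eq1; exact: P0.
  have [cF2 [bF2 [EF2 [NF2 rkF2]]]] := facet_data Hr mem_b0.
  have : (Dr (hv p (L 1)) (hv p (L 2)) (hv p (L 3)) (hv p (L 4)) (hv p (L 11)) (hv p (L 0))) = (Dr (hv p (L 1)) (hv p (L 0)) (hv p (L 2)) (hv p (L 3)) (hv p (L 4)) (hv p (L 11))).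
    rewrite [in X in X = _](sw4).
    rewrite [in X in X = _](sw3).
    rewrite [in X in X = _](sw2).
    rewrite [in X in X = _](sw1).
    by rewrite ?opprK.
  move=> Eq2.
  have P2 : 0 < (Dr (hv p (L 1)) (hv p (L 0)) (hv p (L 2)) (hv p (L 3)) (hv p (L 4)) (hv p (L 10))) * (Dr (hv p (L 1)) (hv p (L 2)) (hv p (L 3)) (hv p (L 4)) (hv p (L 11)) (hv p (L 0))).
    apply: (step (X:=(Dr (hv p (L 1)) (hv p (L 0)) (hv p (L 2)) (hv p (L 3)) (hv p (L 4)) (hv p (L 11)))) (f1:=fv (hv p (L 11)) (phic cF2 bF2)) (f2:=fv (hv p (L 10)) (phic cF2 bF2))).
    - exact: (@KEY _ (phic cF2 bF2) (hv p (L 1)) (hv p (L 0)) (hv p (L 2)) (hv p (L 3)) (hv p (L 4)) (hv p (L 11)) (hv p (L 10)) (EF2 (L 1) ltac:(by rewrite inE)) (EF2 (L 0) ltac:(by rewrite inE)) (EF2 (L 2) ltac:(by rewrite inE)) (EF2 (L 3) ltac:(by rewrite inE)) (EF2 (L 4) ltac:(by rewrite inE))).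
    - exact: (NF2 (L 11) ltac:(by rewrite inE)).
    - exact: (NF2 (L 10) ltac:(by rewrite inE)).
    - by rewrite -Eq2; exact: P0.
  have [cF3 [bF3 [EF3 [NF3 rkF3]]]] := facet_data Hr (mem_simp (l:=[:: 0; 2; 3; 4; 11]) ltac:(by rewrite inE)).
  have : (Dr (hv p (L 1)) (hv p (L 2)) (hv p (L 3)) (hv p (L 4)) (hv p (L 11)) (hv p (L 0))) = (Dr (hv p (L 2)) (hv p (L 0)) (hv p (L 3)) (hv p (L 4)) (hv p (L 11)) (hv p (L 1))).
    rewrite [in X in X = _](sw0).
    rewrite [in X in X = _](sw4).
    rewrite [in X in X = _](sw3).
    rewrite [in X in X = _](sw2).
    rewrite [in X in X = _](sw1).
    rewrite [in X in X = _](sw2).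
    rewrite [in X in X = _](sw3).
    rewrite [in X in X = _](sw4).
    by rewrite ?opprK.
  move=> Eq3.
  have P3 : 0 < (Dr (hv p (L 2)) (hv p (L 0)) (hv p (L 3)) (hv p (L 4)) (hv p (L 11)) (hv p (L 5))) * (Dr (hv p (L 1)) (hv p (L 2)) (hv p (L 3)) (hv p (L 4)) (hv p (L 11)) (hv p (L 0))).
    apply: (step (X:=(Dr (hv p (L 2)) (hv p (L 0)) (hv p (L 3)) (hv p (L 4)) (hv p (L 11)) (hv p (L 1)))) (f1:=fv (hv p (L 1)) (phic cF3 bF3)) (f2:=fv (hv p (L 5)) (phic cF3 bF3))).
    - exact: (@KEY _ (phic cF3 bF3) (hv p (L 2)) (hv p (L 0)) (hv p (L 3)) (hv p (L 4)) (hv p (L 11)) (hv p (L 1)) (hv p (L 5)) (EF3 (L 2) ltac:(by rewrite inE)) (EF3 (L 0) ltac:(by rewrite inE)) (EF3 (L 3) ltac:(by rewrite inE)) (EF3 (L 4) ltac:(by rewrite inE)) (EF3 (L 11) ltac:(by rewrite inE))).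
    - exact: (NF3 (L 1) ltac:(by rewrite inE)).
    - exact: (NF3 (L 5) ltac:(by rewrite inE)).
    - by rewrite -Eq3; exact: P0.
  have : (Dr (hv p (L 1)) (hv p (L 2)) (hv p (L 3)) (hv p (L 4)) (hv p (L 11)) (hv p (L 0))) = (Dr (hv p (L 2)) (hv p (L 0)) (hv p (L 3)) (hv p (L 4)) (hv p (L 11)) (hv p (L 1))).
    rewrite [in X in X = _](sw0).
    rewrite [in X in X = _](sw4).
    rewrite [in X in X = _](sw3).
    rewrite [in X in X = _](sw2).
    rewrite [in X in X = _](sw1).
    rewrite [in X in X = _](sw2).
    rewrite [in X in X = _](sw3).
    rewrite [in X in X = _](sw4).
    by rewrite ?opprK.
  move=> Eq4.
  have P4 : 0 < (Dr (hv p (L 2)) (hv p (L 0)) (hv p (L 3)) (hv p (L 4)) (hv p (L 11)) (hv p (L 7))) * (Dr (hv p (L 1)) (hv p (L 2)) (hv p (L 3)) (hv p (L 4)) (hv p (L 11)) (hv p (L 0))).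
    apply: (step (X:=(Dr (hv p (L 2)) (hv p (L 0)) (hv p (L 3)) (hv p (L 4)) (hv p (L 11)) (hv p (L 1)))) (f1:=fv (hv p (L 1)) (phic cF3 bF3)) (f2:=fv (hv p (L 7)) (phic cF3 bF3))).
    - exact: (@KEY _ (phic cF3 bF3) (hv p (L 2)) (hv p (L 0)) (hv p (L 3)) (hv p (L 4)) (hv p (L 11)) (hv p (L 1)) (hv p (L 7)) (EF3 (L 2) ltac:(by rewrite inE)) (EF3 (L 0) ltac:(by rewrite inE)) (EF3 (L 3) ltac:(by rewrite inE)) (EF3 (L 4) ltac:(by rewrite inE)) (EF3 (L 11) ltac:(by rewrite inE))).
    - exact: (NF3 (L 1) ltac:(by rewrite inE)).
    - exact: (NF3 (L 7) ltac:(by rewrite inE)).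
    - by rewrite -Eq4; exact: P0.
  have [cF4 [bF4 [EF4 [NF4 rkF4]]]] := facet_data Hr (mem_simp (l:=[:: 0; 2; 4; 7; 11]) ltac:(by rewrite inE)).
  have : (Dr (hv p (L 2)) (hv p (L 0)) (hv p (L 3)) (hv p (L 4)) (hv p (L 11)) (hv p (L 7))) = (Dr (hv p (L 2)) (hv p (L 0)) (hv p (L 4)) (hv p (L 7)) (hv p (L 11)) (hv p (L 3))).
    rewrite [in X in X = _](sw2).
    rewrite [in X in X = _](sw4).
    rewrite [in X in X = _](sw3).
    rewrite [in X in X = _](sw4).
    by rewrite ?opprK.
  move=> Eq5.
  have P5 : 0 < (Dr (hv p (L 2)) (hv p (L 0)) (hv p (L 4)) (hv p (L 7)) (hv p (L 11)) (hv p (L 5))) * (Dr (hv p (L 1)) (hv p (L 2)) (hv p (L 3)) (hv p (L 4)) (hv p (L 11)) (hv p (L 0))).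
    apply: (step (X:=(Dr (hv p (L 2)) (hv p (L 0)) (hv p (L 4)) (hv p (L 7)) (hv p (L 11)) (hv p (L 3)))) (f1:=fv (hv p (L 3)) (phic cF4 bF4)) (f2:=fv (hv p (L 5)) (phic cF4 bF4))).
    - exact: (@KEY _ (phic cF4 bF4) (hv p (L 2)) (hv p (L 0)) (hv p (L 4)) (hv p (L 7)) (hv p (L 11)) (hv p (L 3)) (hv p (L 5)) (EF4 (L 2) ltac:(by rewrite inE)) (EF4 (L 0) ltac:(by rewrite inE)) (EF4 (L 4) ltac:(by rewrite inE)) (EF4 (L 7) ltac:(by rewrite inE)) (EF4 (L 11) ltac:(by rewrite inE))).
    - exact: (NF4 (L 3) ltac:(by rewrite inE)).
    - exact: (NF4 (L 5) ltac:(by rewrite inE)).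
    - by rewrite -Eq5; exact: P4.
  have [cF5 [bF5 [EF5 [NF5 rkF5]]]] := facet_data Hr (mem_simp (l:=[:: 0; 1; 3; 7; 11]) ltac:(by rewrite inE)).
  have : (Dr (hv p (L 0)) (hv p (L 1)) (hv p (L 3)) (hv p (L 4)) (hv p (L 11)) (hv p (L 7))) = (Dr (hv p (L 1)) (hv p (L 0)) (hv p (L 3)) (hv p (L 7)) (hv p (L 11)) (hv p (L 4))).
    rewrite [in X in X = _](sw0).
    rewrite [in X in X = _](sw4).
    rewrite [in X in X = _](sw3).
    rewrite [in X in X = _](sw4).
    by rewrite ?opprK.
  move=> Eq6.
  have P6 : 0 < (Dr (hv p (L 1)) (hv p (L 0)) (hv p (L 3)) (hv p (L 7)) (hv p (L 11)) (hv p (L 2))) * (Dr (hv p (L 1)) (hv p (L 2)) (hv p (L 3)) (hv p (L 4)) (hv p (L 11)) (hv p (L 0))).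
    apply: (step (X:=(Dr (hv p (L 1)) (hv p (L 0)) (hv p (L 3)) (hv p (L 7)) (hv p (L 11)) (hv p (L 4)))) (f1:=fv (hv p (L 4)) (phic cF5 bF5)) (f2:=fv (hv p (L 2)) (phic cF5 bF5))).
    - exact: (@KEY _ (phic cF5 bF5) (hv p (L 1)) (hv p (L 0)) (hv p (L 3)) (hv p (L 7)) (hv p (L 11)) (hv p (L 4)) (hv p (L 2)) (EF5 (L 1) ltac:(by rewrite inE)) (EF5 (L 0) ltac:(by rewrite inE)) (EF5 (L 3) ltac:(by rewrite inE)) (EF5 (L 7) ltac:(by rewrite inE)) (EF5 (L 11) ltac:(by rewrite inE))).
    - exact: (NF5 (L 4) ltac:(by rewrite inE)).
    - exact: (NF5 (L 2) ltac:(by rewrite inE)).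
    - by rewrite -Eq6; exact: P1.
  have [cF6 [bF6 [EF6 [NF6 rkF6]]]] := facet_data Hr (mem_simp (l:=[:: 0; 1; 2; 3; 10]) ltac:(by rewrite inE)).
  have : (Dr (hv p (L 1)) (hv p (L 0)) (hv p (L 2)) (hv p (L 3)) (hv p (L 4)) (hv p (L 10))) = (Dr (hv p (L 0)) (hv p (L 1)) (hv p (L 2)) (hv p (L 3)) (hv p (L 10)) (hv p (L 4))).
    rewrite [in X in X = _](sw0).
    rewrite [in X in X = _](sw4).
    by rewrite ?opprK.
  move=> Eq7.
  have P7 : 0 < (Dr (hv p (L 0)) (hv p (L 1)) (hv p (L 2)) (hv p (L 3)) (hv p (L 10)) (hv p (L 5))) * (Dr (hv p (L 1)) (hv p (L 2)) (hv p (L 3)) (hv p (L 4)) (hv p (L 11)) (hv p (L 0))).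
    apply: (step (X:=(Dr (hv p (L 0)) (hv p (L 1)) (hv p (L 2)) (hv p (L 3)) (hv p (L 10)) (hv p (L 4)))) (f1:=fv (hv p (L 4)) (phic cF6 bF6)) (f2:=fv (hv p (L 5)) (phic cF6 bF6))).
    - exact: (@KEY _ (phic cF6 bF6) (hv p (L 0)) (hv p (L 1)) (hv p (L 2)) (hv p (L 3)) (hv p (L 10)) (hv p (L 4)) (hv p (L 5)) (EF6 (L 0) ltac:(by rewrite inE)) (EF6 (L 1) ltac:(by rewrite inE)) (EF6 (L 2) ltac:(by rewrite inE)) (EF6 (L 3) ltac:(by rewrite inE)) (EF6 (L 10) ltac:(by rewrite inE))).
    - exact: (NF6 (L 4) ltac:(by rewrite inE)).
    - exact: (NF6 (L 5) ltac:(by rewrite inE)).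
    - by rewrite -Eq7; exact: P2.
  have : (Dr (hv p (L 0)) (hv p (L 1)) (hv p (L 2)) (hv p (L 3)) (hv p (L 10)) (hv p (L 5))) = (Dr (hv p (L 1)) (hv p (L 0)) (hv p (L 2)) (hv p (L 3)) (hv p (L 5)) (hv p (L 10))).
    rewrite [in X in X = _](sw0).
    rewrite [in X in X = _](sw4).
    by rewrite ?opprK.
  move=> Eq8.
  have P8 : 0 < (Dr (hv p (L 1)) (hv p (L 0)) (hv p (L 2)) (hv p (L 3)) (hv p (L 5)) (hv p (L 11))) * (Dr (hv p (L 1)) (hv p (L 2)) (hv p (L 3)) (hv p (L 4)) (hv p (L 11)) (hv p (L 0))).
    apply: (step (X:=(Dr (hv p (L 1)) (hv p (L 0)) (hv p (L 2)) (hv p (L 3)) (hv p (L 5)) (hv p (L 10)))) (f1:=fv (hv p (L 10)) (phic cF2 bF2)) (f2:=fv (hv p (L 11)) (phic cF2 bF2))).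
    - exact: (@KEY _ (phic cF2 bF2) (hv p (L 1)) (hv p (L 0)) (hv p (L 2)) (hv p (L 3)) (hv p (L 5)) (hv p (L 10)) (hv p (L 11)) (EF2 (L 1) ltac:(by rewrite inE)) (EF2 (L 0) ltac:(by rewrite inE)) (EF2 (L 2) ltac:(by rewrite inE)) (EF2 (L 3) ltac:(by rewrite inE)) (EF2 (L 5) ltac:(by rewrite inE))).
    - exact: (NF2 (L 10) ltac:(by rewrite inE)).
    - exact: (NF2 (L 11) ltac:(by rewrite inE)).
    - by rewrite -Eq8; exact: P7.
  have [cF7 [bF7 [EF7 [NF7 rkF7]]]] := facet_data Hr (mem_simp (l:=[:: 0; 2; 5; 7; 11]) ltac:(by rewrite inE)).
  have : (Dr (hv p (L 2)) (hv p (L 0)) (hv p (L 4)) (hv p (L 7)) (hv p (L 11)) (hv p (L 5))) = (Dr (hv p (L 0)) (hv p (L 2)) (hv p (L 5)) (hv p (L 7)) (hv p (L 11)) (hv p (L 4))).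
    rewrite [in X in X = _](sw0).
    rewrite [in X in X = _](sw4).
    rewrite [in X in X = _](sw3).
    rewrite [in X in X = _](sw2).
    rewrite [in X in X = _](sw3).
    rewrite [in X in X = _](sw4).
    by rewrite ?opprK.
  move=> Eq9.
  have P9 : 0 < (Dr (hv p (L 0)) (hv p (L 2)) (hv p (L 5)) (hv p (L 7)) (hv p (L 11)) (hv p (L 3))) * (Dr (hv p (L 1)) (hv p (L 2)) (hv p (L 3)) (hv p (L 4)) (hv p (L 11)) (hv p (L 0))).
    apply: (step (X:=(Dr (hv p (L 0)) (hv p (L 2)) (hv p (L 5)) (hv p (L 7)) (hv p (L 11)) (hv p (L 4)))) (f1:=fv (hv p (L 4)) (phic cF7 bF7)) (f2:=fv (hv p (L 3)) (phic cF7 bF7))).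
    - exact: (@KEY _ (phic cF7 bF7) (hv p (L 0)) (hv p (L 2)) (hv p (L 5)) (hv p (L 7)) (hv p (L 11)) (hv p (L 4)) (hv p (L 3)) (EF7 (L 0) ltac:(by rewrite inE)) (EF7 (L 2) ltac:(by rewrite inE)) (EF7 (L 5) ltac:(by rewrite inE)) (EF7 (L 7) ltac:(by rewrite inE)) (EF7 (L 11) ltac:(by rewrite inE))).
    - exact: (NF7 (L 4) ltac:(by rewrite inE)).
    - exact: (NF7 (L 3) ltac:(by rewrite inE)).
    - by rewrite -Eq9; exact: P5.
  have G := GP (hv p (L 0)) (hv p (L 2)) (hv p (L 3)) (hv p (L 11)) (hv p (L 1)) (hv p (L 4)) (hv p (L 5)) (hv p (L 7)).
  have : (Dr (hv p (L 0)) (hv p (L 2)) (hv p (L 3)) (hv p (L 11)) (hv p (L 1)) (hv p (L 4))) = - (Dr (hv p (L 1)) (hv p (L 2)) (hv p (L 3)) (hv p (L 4)) (hv p (L 11)) (hv p (L 0))).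
    rewrite [in X in X = _](sw3).
    rewrite [in X in X = _](sw2).
    rewrite [in X in X = _](sw1).
    rewrite [in X in X = _](sw0).
    rewrite [in X in X = _](sw1).
    rewrite [in X in X = _](sw2).
    rewrite [in X in X = _](sw4).
    rewrite [in X in X = _](sw3).
    rewrite [in X in X = _](sw4).
    by rewrite ?opprK.
  move=> G0; rewrite G0 in G.
  have : (Dr (hv p (L 0)) (hv p (L 2)) (hv p (L 3)) (hv p (L 11)) (hv p (L 5)) (hv p (L 7))) = - (Dr (hv p (L 0)) (hv p (L 2)) (hv p (L 5)) (hv p (L 7)) (hv p (L 11)) (hv p (L 3))).
    rewrite [in X in X = _](sw3).
    rewrite [in X in X = _](sw2).
    rewrite [in X in X = _](sw4).
    rewrite [in X in X = _](sw3).
    rewrite [in X in X = _](sw4).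
    by rewrite ?opprK.
  move=> G1; rewrite G1 in G.
  have : (Dr (hv p (L 0)) (hv p (L 2)) (hv p (L 3)) (hv p (L 11)) (hv p (L 1)) (hv p (L 5))) = - (Dr (hv p (L 1)) (hv p (L 0)) (hv p (L 2)) (hv p (L 3)) (hv p (L 5)) (hv p (L 11))).
    rewrite [in X in X = _](sw3).
    rewrite [in X in X = _](sw2).
    rewrite [in X in X = _](sw1).
    rewrite [in X in X = _](sw0).
    rewrite [in X in X = _](sw4).
    by rewrite ?opprK.
  move=> G2; rewrite G2 in G.
  have : (Dr (hv p (L 0)) (hv p (L 2)) (hv p (L 3)) (hv p (L 11)) (hv p (L 4)) (hv p (L 7))) = (Dr (hv p (L 2)) (hv p (L 0)) (hv p (L 3)) (hv p (L 4)) (hv p (L 11)) (hv p (L 7))).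
    rewrite [in X in X = _](sw0).
    rewrite [in X in X = _](sw3).
    by rewrite ?opprK.
  move=> G3; rewrite G3 in G.
  have : (Dr (hv p (L 0)) (hv p (L 2)) (hv p (L 3)) (hv p (L 11)) (hv p (L 1)) (hv p (L 7))) = (Dr (hv p (L 1)) (hv p (L 0)) (hv p (L 3)) (hv p (L 7)) (hv p (L 11)) (hv p (L 2))).
    rewrite [in X in X = _](sw3).
    rewrite [in X in X = _](sw2).
    rewrite [in X in X = _](sw1).
    rewrite [in X in X = _](sw0).
    rewrite [in X in X = _](sw2).
    rewrite [in X in X = _](sw4).
    rewrite [in X in X = _](sw3).
    rewrite [in X in X = _](sw4).
    by rewrite ?opprK.
  move=> G4; rewrite G4 in G.
  have : (Dr (hv p (L 0)) (hv p (L 2)) (hv p (L 3)) (hv p (L 11)) (hv p (L 4)) (hv p (L 5))) = (Dr (hv p (L 2)) (hv p (L 0)) (hv p (L 3)) (hv p (L 4)) (hv p (L 11)) (hv p (L 5))).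
    rewrite [in X in X = _](sw0).
    rewrite [in X in X = _](sw3).
    by rewrite ?opprK.
  move=> G5; rewrite G5 in G.
  have Q0 := prodpos P0 P9.
  have Q1 := prodpos P8 P4.
  have Q2 := prodpos P6 P3.
  clear -G Q0 Q1 Q2.
  lra.

Qed.
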